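(* Let $\mathcal{A},\mathcal{B}$ be Hilbert spaces with $\dim\mathcal{A}=\dim\mathcal{B}=d$, let $|\phi\rangle\in\mathcal{A}\otimes\mathcal{B}$ be an entangled pure state, and let $\rho=\frac{1}{d^2-1}(I_{\mathcal{A}\otimes\mathcal{B}}-|\phi\rangle\langle\phi|)$. Then $\{|\phi\rangle\langle\phi|,\rho\}$ is indistinguishable by PPT operations in the many copy scenario.
   Context: A bipartite positive semidefinite operator $E$ is PPT if its partial transpose $E^{T_B}$ (defined by $(|i\rangle\langle k|\otimes|j\rangle\langle l|)^{T_B}=|i\rangle\langle k|\otimes|l\rangle\langle j|$) is positive semidefinite. A set of orthogonal states $\{\rho_1,\dots,\rho_n\}$ on $\mathcal{A}\otimes\mathcal{B}$ is unambiguously distinguishable by PPT operations if there exist PPT operators $M_1,\dots,M_n$ with $\sum_k M_k=I$ and $\operatorname{tr}(M_i\rho_j)=p_i\delta_{ij}$, $p_i>0$ for all $i,j$; otherwise it is indistinguishable by PPT operations. It is indistinguishable by PPT operations in the many copy scenario if for every positive integer $m$, $\{\rho_1^{\otimes m},\dots,\rho_n^{\otimes m}\}$, regarded as bipartite states with respect to $\mathcal{A}^{\otimes m}:\mathcal{B}^{\otimes m}$, is indistinguishable by PPT operations. *)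

(* Defs.v *)
From mathcomp Require Import all_boot all_order all_algebra.
From mathcomp Require Export complex.
Set Implicit Arguments. Unset Strict Implicit. Unset Printing Implicit Defensive.
Import Order.TTheory GRing.Theory Num.Theory.
Local Open Scope ring_scope.

(* Operators on the finite-dimensional Hilbert space C^T (T a finite index
   set, orthonormal basis |t>), given by their matrix entries <x|E|y>. *)
Definition op (C : Type) (T : finType) := T -> T -> C.

Section Ops.
Variable C : numClosedFieldType.

Definition psd (T : finType) (E : op C T) : Prop :=
  forall v : T -> C, 0 <= \sum_(x : T) \sum_(y : T) (v x)^* * E x y * v y.

Definition idop (T : finType) : op C T := fun x y => (x == y)%:R.

Definition trace_prod (T : finType) (M E : op C T) : C :=
  \sum_(x : T) \sum_(y : T) M x y * E y x.

(* partial transpose on the B factor of A (x) B, index (a,b):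
   (|i><k| (x) |j><l|)^{T_B} = |i><k| (x) |l><j| *)
Definition ptB (TA TB : finType) (E : op C (TA * TB)%type) : op C (TA * TB)%type :=
  fun x y => E (x.1, y.2) (y.1, x.2).

Definition PPT (TA TB : finType) (E : op C (TA * TB)%type) : Prop :=
  psd E /\ psd (ptB E).

Definition PPT_unamb_dist (TA TB : finType) (n : nat)
  (rho : 'I_n -> op C (TA * TB)%type) : Prop :=
  exists (M : 'I_n -> op C (TA * TB)%type) (p : 'I_n -> C),
    (forall i, PPT (M i)) /\
    (forall x y, \sum_(i < n) M i x y = idop x y) /\
    (forall i, 0 < p i) /\
    (forall i j, trace_prod (M i) (rho j) = if i == j then p i else 0).

(* m-fold tensor power of a bipartite operator on A (x) B, regarded as a
   bipartite operator on A^{(x)m} : B^{(x)m}; a basis vector of A^{(x)m} is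
   a function 'I_m -> TA, similarly for B. *)
Definition tpow (TA TB : finType) (m : nat) (E : op C (TA * TB)%type) :
  op C ({ffun 'I_m -> TA} * {ffun 'I_m -> TB})%type :=
  fun x y => \prod_(k < m) E (x.1 k, x.2 k) (y.1 k, y.2 k).

Definition PPT_indist_many_copy (TA TB : finType) (n : nat)
  (rho : 'I_n -> op C (TA * TB)%type) : Prop :=
  forall m : nat, (0 < m)%N -> ~ PPT_unamb_dist (fun i => @tpow TA TB m (rho i)).

Definition normalized (T : finType) (v : T -> C) : Prop :=
  \sum_(x : T) (v x)^* * v x = 1.

Definition product_vec (TA TB : finType) (v : (TA * TB)%type -> C) : Prop :=
  exists (a : TA -> C) (b : TB -> C), forall i j, v (i, j) = a i * b j.

Definition entangled_pure (TA TB : finType) (v : (TA * TB)%type -> C) : Prop :=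
  normalized v /\ ~ product_vec v.

Definition proj (T : finType) (v : T -> C) : op C T :=
  fun x y => v x * (v y)^*.

End Ops.
Arguments idop {C T} x y.
Arguments tpow {C TA TB} m E x y.

(* Main.v *)
Require Import Defs.
From mathcomp Require Import all_boot all_order all_algebra.
From mathcomp Require Import complex.
From mathcomp Require Import ring zify.
From Stdlib Require Import ClassicalEpsilon.
Import Order.TTheory GRing.Theory Num.Theory.
Local Open Scope ring_scope.

Set Implicit Arguments. Unset Strict Implicit.
Section Gen.
Variable C : numClosedFieldType.

Lemma sum_dr (T : finType) (F : T -> C) a : \sum_i F i * (i == a)%:R = F a.
Proof.
rewrite (bigD1 a) //= eqxx mulr1 big1 ?addr0 // => i Hi; by rewrite (negbTE Hi) mulr0.
Qed.
Lemma sum_dl (T : finType) (F : T -> C) a : \sum_i (i == a)%:R * F i = F a.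
Proof. rewrite -[RHS](sum_dr F a); apply: eq_bigr => i _; exact: mulrC. Qed.
Lemma sum_dr' (T : finType) (F : T -> C) a : \sum_i F i * (a == i)%:R = F a.
Proof. rewrite -[RHS](sum_dr F a); apply: eq_bigr => i _; by rewrite eq_sym. Qed.
Lemma sum_dl' (T : finType) (F : T -> C) a : \sum_i (a == i)%:R * F i = F a.
Proof. rewrite -[RHS](sum_dl F a); apply: eq_bigr => i _; by rewrite eq_sym. Qed.

Definition Bf (T : finType) (E : op C T) (u v : T -> C) :=
  \sum_x \sum_y (u x)^* * E x y * v y.

Lemma Bf_expand (T : finType) (E : op C T) u v a b :
  Bf E (fun x => a * u x + b * v x) (fun x => a * u x + b * v x) =
  a^* * a * Bf E u u + a^* * b * Bf E u v + b^* * a * Bf E v u + b^* * b * Bf E v v.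
Proof.
rewrite /Bf !mulr_sumr -!big_split /=; apply: eq_bigr => x _.
rewrite !mulr_sumr -!big_split /=; apply: eq_bigr => y _.
rewrite rmorphD !rmorphM /=; ring.
Qed.

Lemma Bf_delta (T : finType) (E : op C T) x y :
  Bf E (fun z => (z == x)%:R) (fun z => (z == y)%:R) = E x y.
Proof.
rewrite /Bf (bigD1 x) //=.
rewrite [X in _ + X]big1 ?addr0; last first.
  move=> z Hz; rewrite (negbTE Hz) rmorph0 /=; apply: big1 => ? _; by rewrite !mul0r.
rewrite eqxx rmorph1 /=; under eq_bigr do rewrite mul1r; exact: sum_dr.
Qed.

Lemma psd_herm (T : finType) (E : op C T) : psd E -> forall x y, (E x y)^* = E y x.
Proof.
move=> pE x y.
have Q2 : forall a b, 0 <= a^* * a * E x x + a^* * b * E x y + b^* * a * E y x + b^* * b * E y y.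
  move=> a b; rewrite -(Bf_delta E x x) -(Bf_delta E x y) -(Bf_delta E y x) -(Bf_delta E y y).
  rewrite -Bf_expand; exact: pE.
have Dx : 0 <= E x x by rewrite -Bf_delta; exact: pE.
have Dy : 0 <= E y y by rewrite -Bf_delta; exact: pE.
have hi : 'i^* * 'i = 1 :> C by rewrite conjCi mulNr -expr2 sqrCi opprK.
have r1 : E x y + E y x \is Num.real.
  have := ger0_real (Q2 1 1); rewrite rmorph1 !mul1r => h.
  have -> : E x y + E y x = (E x x + E x y + E y x + E y y) - E x x - E y y by ring.
  by rewrite !rpredB // ger0_real.
have r2 : 'i * E x y - 'i * E y x \is Num.real.
  have := ger0_real (Q2 1 'i); rewrite rmorph1 !mul1r mulr1 hi conjCi mul1r => h.
  have -> : 'i * E x y - 'i * E y x = (E x x + 'i * E x y + - 'i * E y x + E y y) - E x x - E y y by ring.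
  by rewrite !rpredB // ger0_real.
have e1 := conj_Creal r1; have e2 := conj_Creal r2.
rewrite rmorphD in e1; rewrite rmorphB !rmorphM /= conjCi in e2.
set p := E x y in e1 e2 *; set q := E y x in e1 e2 *.
have h2 : (2%:R : C) != 0 by rewrite pnatr_eq0.
apply: (mulfI h2); apply/eqP; rewrite -subr_eq0; apply/eqP.
have -> : 2%:R * p^* - 2%:R * q = (p^* + q^* - (p + q)) + 'i * ((- 'i * p^* - - 'i * q^*) - ('i * p - 'i * q)) + (1 + 'i * 'i) * (p^* - q - q^* + p) by ring.
by rewrite e1 e2 !subrr mulr0 -expr2 sqrCi subrr mul0r !addr0.
Qed.
Lemma Bf_herm (T : finType) (E : op C T) u v : psd E -> Bf E u v = (Bf E v u)^*.
Proof.
move=> pE; rewrite /Bf rmorph_sum exchange_big /=; apply: eq_bigr => y _.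
rewrite rmorph_sum; apply: eq_bigr => x _.
by rewrite !rmorphM /= conjCK (psd_herm pE); ring.
Qed.

Lemma psd_kernel (T : finType) (E : op C T) w :
  psd E -> Bf E w w = 0 -> forall x, \sum_y E x y * w y = 0.
Proof.
move=> pE Q0.
pose z := fun x => \sum_y E x y * w y.
pose n := \sum_x (z x)^* * z x.
have Bzw : Bf E z w = n.
  rewrite /Bf /n; apply: eq_bigr => x _; rewrite /z mulr_sumr; apply: eq_bigr => y _; by rewrite mulrA.
have n0 : 0 <= n.
  by apply: sumr_ge0 => x _; rewrite mulrC mul_conjC_ge0.
have nc : n^* = n by apply: conj_Creal; exact: ger0_real.
have Bwz : Bf E w z = n by rewrite (Bf_herm _ _ pE) Bzw nc.
have Q1 : 0 <= Bf E z z by exact: pE.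
have ac : (Bf E z z + n)^* = Bf E z z + n by apply: conj_Creal; apply: ger0_real; exact: addr_ge0.
have := pE (fun x => (Bf E z z + n) * w x + (- n) * z x).
have bc : (- n)^* = - n by apply: conj_Creal; rewrite rpredN; exact: ger0_real.
rewrite -/(Bf _ _ _) Bf_expand Q0 Bwz Bzw ac bc.
set Q := Bf E z z.
have -> : (Q + n) * (Q + n) * 0 + (Q + n) * - n * n + - n * (Q + n) * n + - n * - n * Q
   = - (n * n * (Q + n *+ 2)) by ring.
rewrite oppr_ge0 => h.
have h' : n * n * (Q + n *+ 2) = 0.
  apply/eqP; rewrite eq_le h /=; apply: mulr_ge0; first exact: mulr_ge0.
  by apply: addr_ge0 => //; rewrite mulrn_wge0.
have nz : n = 0.
  move/eqP: h'; rewrite !mulf_eq0 orbb => /orP [/eqP //|].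
  rewrite paddr_eq0 // ?mulrn_wge0 // => /andP [_].
  by rewrite mulrn_eq0 /= => /eqP.
move=> x.
move: nz; rewrite /n => /psumr_eq0P H.
have {H} := H (fun i _ => ltac:(by rewrite mulrC mul_conjC_ge0)) x isT.
by rewrite mulrC => /eqP; rewrite mul_conjC_eq0 => /eqP.
Qed.
Lemma trace_ptB (TA TB : finType) (M X : op C (TA * TB)%type) :
  trace_prod M X = trace_prod (ptB M) (ptB X).
Proof.
rewrite /trace_prod /ptB !pair_big /=.
pose h := fun p : (TA * TB) * (TA * TB) => ((p.1.1, p.2.2), (p.2.1, p.1.2)).
have hK : involutive h by move=> [[a b] [a' b']].
rewrite (reindex_inj (inv_inj hK)) /=.
by apply: eq_bigr => -[[a b] [a' b']].
Qed.

Lemma tpow_scale (TA TB : finType) m (E : op C (TA * TB)%type) c x y :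
  tpow m (fun s t => c * E s t) x y = c ^+ m * tpow m E x y.
Proof. by rewrite /tpow big_split /= prodr_const card_ord. Qed.

Lemma trace_scale (T : finType) (N Y : op C T) c :
  trace_prod N (fun x y => c * Y x y) = c * trace_prod N Y.
Proof.
rewrite /trace_prod mulr_sumr; apply: eq_bigr => x _; rewrite mulr_sumr.
by apply: eq_bigr => y _; ring.
Qed.

Lemma ffpair_eq (TA TB : finType) m (y y0 : ({ffun 'I_m -> TA} * {ffun 'I_m -> TB})%type) :
  (y == y0)%:R = \prod_k ((y.1 k, y.2 k) == (y0.1 k, y0.2 k))%:R :> C.
Proof.
case: (eqVneq y y0) => [->|ne].
  by rewrite big1 // => k _; rewrite eqxx.
have : ~~ [forall k, (y.1 k, y.2 k) == (y0.1 k, y0.2 k)].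
  apply: contra ne => /forallP H; case: y H => [y1 y2]; case: y0 => [z1 z2] /= H.
  apply/eqP; congr pair; apply/ffunP => k; by have /eqP[] := H k.
case/forallPn => k /negbTE Hk.
by rewrite (bigD1 k) //= Hk mul0r.
Qed.

Lemma tensor_zero (TA TB J : finType) (v : J -> (TA * TB)%type -> C)
  (alpha : (TA * TB)%type -> J -> C) (m : nat)
  (N : op C ({ffun 'I_m -> TA} * {ffun 'I_m -> TB})%type) :
  (forall t s, (s == t)%:R = \sum_j alpha t j * v j s) ->
  psd N ->
  trace_prod N (tpow m (fun s t => \sum_j v j s * (v j t)^* )) = 0 ->
  forall x y, N x y = 0.
Proof.
move=> span pN tr0.
pose W := fun (f : {ffun 'I_m -> J}) (x : ({ffun 'I_m -> TA} * {ffun 'I_m -> TB})%type) =>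
  \prod_k v (f k) (x.1 k, x.2 k).
have tpE : forall x y, tpow m (fun s t => \sum_j v j s * (v j t)^* ) x y
   = \sum_f W f x * (W f y)^*.
  move=> x y; rewrite /tpow bigA_distr_bigA /=; apply: eq_bigr => f _.
  by rewrite /W rmorph_prod -big_split.
have trE : trace_prod N (tpow m (fun s t => \sum_j v j s * (v j t)^* )) = \sum_f Bf N (W f) (W f).
  rewrite /trace_prod /Bf.
  under eq_bigr do under eq_bigr do rewrite tpE mulr_sumr.
  under eq_bigr do rewrite exchange_big /=.
  rewrite exchange_big /=; apply: eq_bigr => f _; apply: eq_bigr => x _.
  by apply: eq_bigr => y _; ring.
rewrite trE in tr0.
have Q0 : forall f, Bf N (W f) (W f) = 0.
  move=> f; move/psumr_eq0P: tr0 => H; apply: H => // g _; exact: pN.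
have K : forall f x, \sum_y N x y * W f y = 0.
  move=> f; exact: psd_kernel pN (Q0 f).
move=> x y0.
pose beta := fun f : {ffun 'I_m -> J} => \prod_k alpha (y0.1 k, y0.2 k) (f k).
have ey : forall y, (y == y0)%:R = \sum_f beta f * W f y.
  move=> y; rewrite ffpair_eq.
  under eq_bigr do rewrite span.
  rewrite bigA_distr_bigA /=; apply: eq_bigr => f _.
  by rewrite /beta /W -big_split.
transitivity (\sum_y N x y * (y == y0)%:R); first by rewrite sum_dr.
under eq_bigr do rewrite ey mulr_sumr.
rewrite exchange_big /= big1 // => f _.
rewrite -[RHS](mulr0 (beta f)) -[X in beta f * X](K f x) mulr_sumr; apply: eq_bigr => y _; ring.
Qed.
End Gen.

Set Implicit Arguments. Unset Strict Implicit.

Section Dec.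
Variable C : numClosedFieldType.
Variable d : nat.
Variable phi : ('I_d * 'I_d)%type -> C.

Definition Jt := ((('I_d * 'I_d) * ('I_d * 'I_d)) + ('I_d * 'I_d))%type.

Definition vdec (j : Jt) (s : ('I_d * 'I_d)%type) : C :=
  match j with
  | inl ((b, i), (j', be)) =>
      ((phi (i, b))^* * (s.1 == j')%:R - (phi (j', b))^* * (s.1 == i)%:R) * (s.2 == be)%:R
  | inr (b, b') => phi (s.1, b') * (s.2 == b)%:R - phi (s.1, b) * (s.2 == b')%:R
  end.

Lemma sum_pair (A B : finType) (G : (A * B)%type -> C) :
  \sum_p G p = \sum_a \sum_b G (a, b).
Proof. by rewrite pair_big; apply: eq_bigr => -[]. Qed.

Lemma vdec_sum : normalized phi -> forall s1 s2 t1 t2,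
  \sum_j vdec j (s1, s2) * (vdec j (t1, t2))^* =
  2%:R * ((s1 == t1)%:R * (s2 == t2)%:R - phi (s1, t2) * (phi (t1, s2))^*).
Proof.
move=> nphi s1 s2 t1 t2.
pose ps := fun x => (phi x)^*.
have g1 : \sum_b \sum_i ps (i, b) * phi (i, b) = 1.
  rewrite exchange_big /= -[RHS]nphi sum_pair; apply: eq_bigr => i _.
  by apply: eq_bigr.
pose g := fun b => \sum_j ps (j, b) * phi (j, b).
pose h := \sum_b phi (s1, b) * ps (t1, b).
have Lb : forall b i j, \sum_be vdec (inl ((b, i), (j, be))) (s1, s2) * (vdec (inl ((b, i), (j, be))) (t1, t2))^*
   = ((ps (i, b) * (s1 == j)%:R - ps (j, b) * (s1 == i)%:R) *
      (phi (i, b) * (t1 == j)%:R - phi (j, b) * (t1 == i)%:R)) * (t2 == s2)%:R.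
  move=> b i j /=.
  rewrite -[RHS](sum_dl' (fun be => (_ * (t2 == be)%:R)) s2) /=.
  apply: eq_bigr => be _.
  rewrite !rmorphM !rmorphB !rmorphM /= !conjC_nat !conjCK /ps; ring.
have Lj : forall b i, \sum_j ((ps (i, b) * (s1 == j)%:R - ps (j, b) * (s1 == i)%:R) *
      (phi (i, b) * (t1 == j)%:R - phi (j, b) * (t1 == i)%:R))
   = ps (i, b) * phi (i, b) * (t1 == s1)%:R - ps (i, b) * (t1 == i)%:R * phi (s1, b)
     - phi (i, b) * (s1 == i)%:R * ps (t1, b) + (s1 == i)%:R * (t1 == i)%:R * g b.
  move=> b i.
  rewrite (eq_bigr (fun j => ps (i, b) * phi (i, b) * ((s1 == j)%:R * (t1 == j)%:R)
     - ps (i, b) * (t1 == i)%:R * (phi (j, b) * (s1 == j)%:R)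
     - phi (i, b) * (s1 == i)%:R * (ps (j, b) * (t1 == j)%:R)
     + (s1 == i)%:R * (t1 == i)%:R * (ps (j, b) * phi (j, b)))); last by move=> j _; ring.
  rewrite big_split !sumrB /= -!mulr_sumr sum_dl' !sum_dr'.
  done.
have Li : forall b, \sum_i (ps (i, b) * phi (i, b) * (t1 == s1)%:R - ps (i, b) * (t1 == i)%:R * phi (s1, b)
     - phi (i, b) * (s1 == i)%:R * ps (t1, b) + (s1 == i)%:R * (t1 == i)%:R * g b)
   = 2%:R * (t1 == s1)%:R * g b - 2%:R * phi (s1, b) * ps (t1, b).
  move=> b.
  rewrite (eq_bigr (fun i => (t1 == s1)%:R * (ps (i, b) * phi (i, b))
     - phi (s1, b) * (ps (i, b) * (t1 == i)%:R)
     - ps (t1, b) * (phi (i, b) * (s1 == i)%:R)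
     + g b * ((s1 == i)%:R * (t1 == i)%:R))); last by move=> i _; ring.
  rewrite big_split !sumrB /= -!mulr_sumr sum_dl' !sum_dr'.
  rewrite -/(g b); ring.
have Rb : forall b, \sum_b' vdec (inr (b, b')) (s1, s2) * (vdec (inr (b, b')) (t1, t2))^*
   = (s2 == b)%:R * (t2 == b)%:R * h - (s2 == b)%:R * ps (t1, b) * phi (s1, t2)
     - phi (s1, b) * (t2 == b)%:R * ps (t1, s2) + phi (s1, b) * ps (t1, b) * (t2 == s2)%:R.
  move=> b /=.
  rewrite (eq_bigr (fun b' => (s2 == b)%:R * (t2 == b)%:R * (phi (s1, b') * ps (t1, b'))
     - (s2 == b)%:R * ps (t1, b) * (phi (s1, b') * (t2 == b')%:R)
     - phi (s1, b) * (t2 == b)%:R * ((s2 == b')%:R * ps (t1, b'))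
     + phi (s1, b) * ps (t1, b) * ((s2 == b')%:R * (t2 == b')%:R))); last first.
    move=> b' _; rewrite !rmorphB !rmorphM /= !conjC_nat /ps; ring.
  rewrite big_split !sumrB /= -!mulr_sumr sum_dl' !sum_dr'.
  by rewrite [(s2 == t2)]eq_sym.
rewrite big_sumType !sum_pair.
under eq_bigr do under eq_bigr do rewrite sum_pair.
under eq_bigr do under eq_bigr do under eq_bigr do rewrite Lb.
under eq_bigr do under eq_bigr do rewrite -mulr_suml Lj.
under eq_bigr do rewrite -mulr_suml Li.
under [X in _ + X = _]eq_bigr do rewrite Rb.
rewrite (eq_bigr (fun i => (2%:R * (t1 == s1)%:R * (t2 == s2)%:R) * g i
   - (2%:R * (t2 == s2)%:R) * (phi (s1, i) * ps (t1, i)))); last by move=> i _; ring.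
rewrite [X in _ + X = _](eq_bigr (fun i => h * ((s2 == i)%:R * (t2 == i)%:R)
   - phi (s1, t2) * ((s2 == i)%:R * ps (t1, i))
   - ps (t1, s2) * (phi (s1, i) * (t2 == i)%:R)
   + (t2 == s2)%:R * (phi (s1, i) * ps (t1, i)))); last by move=> i _; ring.
rewrite sumrB big_split /= !sumrB -!mulr_sumr g1 !sum_dl' sum_dr' -/h.
rewrite [(t2 == s2)]eq_sym [(t1 == s1)]eq_sym /ps; ring.
Qed.
Lemma minor_exists : entangled_pure phi -> exists a0 b0 i0 j0,
  phi (a0, b0) != 0 /\ phi (i0, j0) * phi (a0, b0) - phi (i0, b0) * phi (a0, j0) != 0.
Proof.
case=> nphi nprod.
have [[a0 b0] nz] : exists x, phi x != 0.
  case: (boolP [exists x, phi x != 0]) => [/existsP //|/existsPn H].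
  exfalso; move: nphi; rewrite /normalized big1 => [/eqP|x _].
    by rewrite eq_sym oner_eq0.
  by have /negPn/eqP -> := H x; rewrite mulr0.
case: (boolP [forall i, forall j, phi (i, j) * phi (a0, b0) == phi (i, b0) * phi (a0, j)]).
  move=> /forallP H; exfalso; apply: nprod.
  exists (fun i => phi (i, b0)), (fun j => phi (a0, j) / phi (a0, b0)) => i j.
  have /forallP/(_ j)/eqP := H i => e.
  by apply: (mulIf nz); rewrite e mulrA divfK.
move=> /forallPn [i0 /forallPn [j0 H]].
by exists a0, b0, i0, j0; split => //; rewrite subr_eq0.
Qed.

Lemma span_dec a0 b0 i0 j0 :
  phi (a0, b0) != 0 -> phi (i0, j0) * phi (a0, b0) - phi (i0, b0) * phi (a0, j0) != 0 ->
  forall t, exists alpha : Jt -> C, forall s, (s == t)%:R = \sum_j alpha j * vdec j s.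
Proof.
move=> nz nD [a be].
pose ps := fun x => (phi x)^*.
have nz' : ps (a0, b0) != 0 by rewrite /ps conjC_eq0.
pose Db := ps (a0, b0) * ps (i0, j0) - ps (a0, j0) * ps (i0, b0).
have nDb : Db != 0.
  have -> : Db = (phi (i0, j0) * phi (a0, b0) - phi (i0, b0) * phi (a0, j0))^*.
    by rewrite /Db /ps rmorphB !rmorphM /=; ring.
  by rewrite conjC_eq0.
pose J1 : Jt := inl ((b0, a0), (a, be)).
pose J2 : Jt := inl ((b0, a0), (i0, be)).
pose J3 : Jt := inl ((j0, a0), (i0, be)).
pose c1 := (ps (a0, b0))^-1.
pose c2 := ps (a, b0) / (ps (a0, b0) * Db) * ps (a0, j0).
pose c3 := - (ps (a, b0) / Db).
exists (fun j => c1 * (j == J1)%:R + c2 * (j == J2)%:R + c3 * (j == J3)%:R) => -[s1 s2].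
rewrite (eq_bigr (fun j => (j == J1)%:R * (c1 * vdec j (s1, s2)) + (j == J2)%:R * (c2 * vdec j (s1, s2))
   + (j == J3)%:R * (c3 * vdec j (s1, s2)))); last by move=> j _; ring.
rewrite !big_split /= !sum_dl /vdec /= xpair_eqE -mulnb natrM.
rewrite /c1 /c2 /c3 /Db.
rewrite /Db in nDb.
field.
by rewrite nDb nz'.
Qed.

Lemma d_ge2 a0 b0 i0 j0 :
  phi (i0, j0) * phi (a0, b0) - phi (i0, b0) * phi (a0, j0) != 0 -> (1 < d)%N.
Proof.
move=> nD; case: (leqP d 1) => // hd.
have e : i0 = a0 by apply: val_inj; have := ltn_ord i0; have := ltn_ord a0; rewrite /=; lia.
by move: nD; rewrite e mulrC subrr eqxx.
Qed.
End Dec.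

Set Implicit Arguments. Unset Strict Implicit.

Lemma trace_ext (C : numClosedFieldType) (T : finType) (N Y Y' : op C T) :
  (forall x y, Y x y = Y' x y) -> trace_prod N Y = trace_prod N Y'.
Proof. by move=> H; apply: eq_bigr => x _; apply: eq_bigr => y _; rewrite H. Qed.

Lemma tpow_ext (C : numClosedFieldType) (TA TB : finType) m (E E' : op C (TA * TB)%type) :
  (forall x y, E x y = E' x y) -> forall x y, tpow m E x y = tpow m E' x y.
Proof. by move=> H x y; apply: eq_bigr => k _; rewrite H. Qed.

Unset Implicit Arguments.
Local Open Scope complex_scope.

Theorem theorem2 (R : rcfType) (d : nat)
  (phi : ('I_d * 'I_d)%type -> R[i]) :
  entangled_pure phi ->
  let rho : op R[i] ('I_d * 'I_d)%type :=
    fun x y => ((d ^ 2 - 1)%:R)^-1 * (idop x y - proj phi x y) in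
  PPT_indist_many_copy
    (fun k : 'I_2 => if k == ord0 then proj phi else rho).
Proof.
move=> ent rho m m0 [M [p [PPTM [sumM [pp tr]]]]].
have [a0 [b0 [i0 [j0 [nz nD]]]]] := minor_exists ent.
have d2 := d_ge2 nD.
pose o1 : 'I_2 := @Ordinal 2 1 isT.
have t01 := tr ord0 o1.
have t00 := tr ord0 ord0.
rewrite /= in t01 t00.
pose X : op R[i] ('I_d * 'I_d)%type := fun x y => idop x y - proj phi x y.
pose kap : R[i] := ((d ^ 2 - 1)%:R)^-1.
have kap0 : kap != 0.
  rewrite /kap invr_eq0 pnatr_eq0; apply/eqP => h.
  have : (4 <= d ^ 2)%N by rewrite -[4%N]/(2 ^ 2)%N leq_exp2r.
  lia.
have tX : trace_prod (M ord0) (tpow m X) = 0.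
  move: t01; rewrite (@trace_ext _ _ _ _ (fun x y => kap ^+ m * tpow m X x y)).
    by rewrite trace_scale => /eqP; rewrite mulf_eq0 expf_eq0 (negbTE kap0) andbF => /eqP.
  by move=> x y; rewrite -tpow_scale.
rewrite trace_ptB in tX.
have nphi : normalized phi by case: ent.
have tV : trace_prod (ptB (M ord0)) (tpow m (fun s t => \sum_j vdec phi j s * (vdec phi j t)^* )) = 0.
  rewrite (@trace_ext _ _ _ _ (fun x y => 2%:R ^+ m * tpow m (ptB X) x y)).
    by rewrite trace_scale -[tpow m (ptB X)]/(ptB (tpow m X)) tX mulr0.
  move=> x y; rewrite -tpow_scale; apply: tpow_ext => -[s1 s2] [t1 t2].
  rewrite vdec_sum // /ptB /X /idop /proj /= xpair_eqE -mulnb natrM [(t2 == s2)]eq_sym.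
  done.
pose alpha := fun t => proj1_sig (constructive_indefinite_description _ (span_dec nz nD t)).
have span : forall t s, (s == t)%:R = \sum_j alpha t j * vdec phi j s.
  move=> t s; rewrite /alpha; case: constructive_indefinite_description => /= al; exact.
have N0 := tensor_zero span (proj2 (PPTM ord0)) tV.
have M0 : forall x y, M ord0 x y = 0.
  by move=> [x1 x2] [y1 y2]; have := N0 (x1, y2) (y1, x2).
move: (pp ord0); rewrite -t00 /trace_prod big1 ?ltxx // => x _.
by rewrite big1 // => y _; rewrite M0 mul0r.
Qed.
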